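(* Let $r_1,r_2\ge 2$ and let $q_1,q_2\ge1$ be integers with $\gcd(q_1,r_2)=1$ and $\gcd(q_2,r_1)=1$. If $P=(P_1,P_2)=\sum_{\delta\in\mathbb{N}}(c_{1,\delta},c_{2,\delta})\binom{X}{\delta}\in(\mathbb{Z}_{r_1}\times\mathbb{Z}_{r_2})\binom{X}{\mathbb{Z}}$ is $q_1q_2$-periodic, then $$\check P:=(P_1(X_1),P_2(X_2))=\sum_{\delta}(c_{1,\delta},0)\binom{X_1}{\delta}+\sum_\delta(0,c_{2,\delta})\binom{X_2}{\delta}$$ is $(q_1,q_2)$-periodic, and $P\mapsto\check P$ is a ring isomorphism $$(\mathbb{Z}_{r_1}\times\mathbb{Z}_{r_2})\binom{X}{\mathbb{Z}_{q_1q_2}}\longrightarrow(\mathbb{Z}_{r_1}\times\mathbb{Z}_{r_2})\binom{X_1,X_2}{\mathbb{Z}_{q_1}\times\mathbb{Z}_{q_2}}$$ whose inverse is $Q\mapsto Q|_{X_1:=X,\,X_2:=X}$. If moreover $\gcd(q_1,q_2)=1$ and $\vartheta:\mathbb{Z}_{q_1q_2}\to\mathbb{Z}_{q_1}\times\mathbb{Z}_{q_2}$, $x+q_1q_2\mathbb{Z}\mapsto(x+q_1\mathbb{Z},x+q_2\mathbb{Z})$, then as maps $\check P=P\circ\vartheta^{-1}$ and $Q|_{X_1:=X,X_2:=X}=Q\circ\vartheta$.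
   Context: Notation: $\mathbb{Z}_r=\mathbb{Z}/r\mathbb{Z}$. $\binom{X}{\delta}=X(X-1)\cdots(X-\delta+1)/\delta!$, $\binom{X}{0}=1$. For $r\ge0$, $\mathbb{Z}\binom{X_1,\dots,X_n}{\mathbb{Z}^n}$ is the ring of integer linear combinations of products $\prod_j\binom{X_j}{\delta_j}$ (a subring of $\mathbb{Q}[X_1,\dots,X_n]$), and $\mathbb{Z}_r\binom{X_1,\dots,X_n}{\mathbb{Z}^n}$ is the quotient ring $\mathbb{Z}\binom{X_1,\dots,X_n}{\mathbb{Z}^n}/r\mathbb{Z}\binom{X_1,\dots,X_n}{\mathbb{Z}^n}$, i.e. formal sums $\sum_\delta P_\delta\prod_j\binom{X_j}{\delta_j}$ with $P_\delta\in\mathbb{Z}_r$, evaluated at integer points with values in $\mathbb{Z}_r$. For $B=\mathbb{Z}_{r_1}\times\mathbb{Z}_{r_2}$, $B$-polyfracts are pairs of such polyfracts with componentwise ring operations. For positive integers $q_j$, $B\binom{X_1,\dots,X_n}{\mathbb{Z}_{q_1}\times\cdots\times\mathbb{Z}_{q_n}}$ is the subring of those polyfracts whose evaluation map on $\mathbb{Z}^n$ is $q_j$-periodic in the $j$-th variable for each $j$ (such maps are identified with maps on $\mathbb{Z}_{q_1}\times\cdots\times\mathbb{Z}_{q_n}$). *)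

(* Defs.v *)
From HB Require Import structures.
From mathcomp Require Import all_boot all_order all_algebra.
Set Implicit Arguments. Unset Strict Implicit. Unset Printing Implicit Defensive.
Import Order.TTheory GRing.Theory Num.Theory.
Local Open Scope ring_scope.

Definition binz (x : int) (d : nat) : int :=
  ((\prod_(i < d) (x - (i : nat)%:Z)) %/ (d`!)%:Z)%Z.

Section Polyfracts.
Variable R : comNzRingType.

(* A one-variable polyfract  sum_d c_d binom(X,d)  with c_d in R is encoded by
   the polynomial  sum_d c_d 'X^d  (only the coefficient sequence is used; the
   {poly} multiplication is NOT the polyfract multiplication, see pf1_mul). *)
Definition pf1_eval (p : {poly R}) (x : int) : R :=
  \sum_(i < size p) p`_i * (binz x i)%:~R.

(* A two-variable polyfract  sum c_{d1,d2} binom(X1,d1) binom(X2,d2)  is encoded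
   by p : {poly {poly R}} with c_{d1,d2} = p`_d1`_d2. *)
Definition pf2_eval (p : {poly {poly R}}) (x1 x2 : int) : R :=
  \sum_(i < size p) \sum_(j < size (p`_i))
     (p`_i)`_j * (binz x1 i)%:~R * (binz x2 j)%:~R.

Definition msz (p : {poly {poly R}}) : nat := (\max_(i < size p) size (p`_i)%R)%N.

(* Newton (forward-difference) interpolation in the binomial basis: the
   binomial-basis coefficients of an integer-valued polynomial map f of degree
   < n are  c_d = sum_{k<=d} (-1)^(d-k) C(d,k) f(k). *)
Definition newton1 (f : int -> R) (n : nat) : {poly R} :=
  \poly_(d < n) \sum_(k < d.+1) ((-1) ^+ (d - k) *+ 'C(d, k)) * f (k : nat)%:Z.

Definition newton2 (f : int -> int -> R) (n m : nat) : {poly {poly R}} :=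
  \poly_(d1 < n) \poly_(d2 < m)
    \sum_(k1 < d1.+1) \sum_(k2 < d2.+1)
      ((-1) ^+ (d1 - k1) *+ 'C(d1, k1)) * ((-1) ^+ (d2 - k2) *+ 'C(d2, k2))
      * f (k1 : nat)%:Z (k2 : nat)%:Z.

(* Ring multiplication of polyfracts (product in Q[X] re-expanded in the
   binomial basis, reduced mod r), computed by Newton interpolation of the
   pointwise product; the degree of the product is at most the sum of degrees. *)
Definition pf1_mul (p q : {poly R}) : {poly R} :=
  newton1 (fun x => pf1_eval p x * pf1_eval q x) (size p + size q).-1.

Definition pf2_mul (p q : {poly {poly R}}) : {poly {poly R}} :=
  newton2 (fun x1 x2 => pf2_eval p x1 x2 * pf2_eval q x1 x2)
          (size p + size q).-1 (msz p + msz q).-1.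

(* Substitution X1 := X, X2 := X  (binom(X,i) binom(X,j) has degree i+j). *)
Definition pf2_diag (p : {poly {poly R}}) : {poly R} :=
  newton1 (fun x => pf2_eval p x x) (size p + msz p).-1.

Definition pf_in_X1 (p : {poly R}) : {poly {poly R}} := map_poly polyC p.
Definition pf_in_X2 (p : {poly R}) : {poly {poly R}} := p%:P.

End Polyfracts.

Definition PF1B (r1 r2 : nat) := ({poly 'Z_r1} * {poly 'Z_r2})%type.
Definition PF2B (r1 r2 : nat) := ({poly {poly 'Z_r1}} * {poly {poly 'Z_r2}})%type.

Definition evB1 r1 r2 (P : PF1B r1 r2) (x : int) : 'Z_r1 * 'Z_r2 :=
  (pf1_eval P.1 x, pf1_eval P.2 x).
Definition evB2 r1 r2 (P : PF2B r1 r2) (x1 x2 : int) : 'Z_r1 * 'Z_r2 :=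
  (pf2_eval P.1 x1 x2, pf2_eval P.2 x1 x2).

Definition addB1 r1 r2 (P Q : PF1B r1 r2) : PF1B r1 r2 := (P.1 + Q.1, P.2 + Q.2).
Definition addB2 r1 r2 (P Q : PF2B r1 r2) : PF2B r1 r2 := (P.1 + Q.1, P.2 + Q.2).
Definition mulB1 r1 r2 (P Q : PF1B r1 r2) : PF1B r1 r2 :=
  (pf1_mul P.1 Q.1, pf1_mul P.2 Q.2).
Definition mulB2 r1 r2 (P Q : PF2B r1 r2) : PF2B r1 r2 :=
  (pf2_mul P.1 Q.1, pf2_mul P.2 Q.2).
Definition oneB1 r1 r2 : PF1B r1 r2 := (1, 1).   (* binom(X,0) = 1 *)
Definition oneB2 r1 r2 : PF2B r1 r2 := (1, 1).

Definition periodicB1 r1 r2 (P : PF1B r1 r2) (q : nat) : Prop :=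
  forall x : int, evB1 P (x + q%:Z) = evB1 P x.
Definition periodicB2 r1 r2 (Q : PF2B r1 r2) (q1 q2 : nat) : Prop :=
  forall x1 x2 : int,
    evB2 Q (x1 + q1%:Z) x2 = evB2 Q x1 x2 /\ evB2 Q x1 (x2 + q2%:Z) = evB2 Q x1 x2.

Definition checkB r1 r2 (P : PF1B r1 r2) : PF2B r1 r2 :=
  (pf_in_X1 P.1, pf_in_X2 P.2).
Definition diagB r1 r2 (Q : PF2B r1 r2) : PF1B r1 r2 :=
  (pf2_diag Q.1, pf2_diag Q.2).

(* Main.v *)
Require Import Defs.
From HB Require Import structures.
From mathcomp Require Import all_boot all_order all_algebra.
From mathcomp Require Import ring.
From Stdlib Require Import FunctionalExtensionality.
Import Order.TTheory GRing.Theory Num.Theory.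
Local Open Scope ring_scope.



Definition Pr (x : int) (d : nat) : int := \prod_(i < d) (x - (i : nat)%:Z).

Lemma PrSr x d : Pr x d.+1 = Pr x d * (x - d%:Z).
Proof. by rewrite /Pr big_ord_recr. Qed.

Lemma PrSl x d : Pr (x + 1) d.+1 = (x + 1) * Pr x d.
Proof.
rewrite /Pr big_ord_recl /= subr0; congr (_ * _).
apply: eq_bigr => i _; rewrite /bump /= add1n -addn1 PoszD opprD addrA.
by rewrite addrAC addrK.
Qed.

Lemma Pr0 d : Pr 0 d.+1 = 0.
Proof. by rewrite /Pr big_ord_recl /= subr0 mul0r. Qed.

Lemma int_ind2 (P : int -> Prop) : P 0 -> (forall x, P x <-> P (x + 1)) -> forall x, P x.
Proof.
move=> P0 HS.
have H : forall n : nat, P n%:Z /\ P (- n%:Z).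
  elim=> [|n [IH1 IH2]]; first by rewrite oppr0.
  split; first by rewrite -addn1 PoszD; apply: (HS _).1.
  apply: (HS _).2; rewrite -addn1 PoszD opprD addrNK //.
case=> n; first by case: (H n).
by rewrite NegzE; case: (H n.+1).
Qed.

Lemma PrD x d : Pr (x + 1) d.+1 = Pr x d.+1 + d.+1%:Z * Pr x d.
Proof.
rewrite PrSl PrSr -[d.+1]addn1 PoszD; ring.
Qed.

Lemma fact_dvd d x : ((d`!)%:Z %| Pr x d)%Z.
Proof.
elim: d x => [|d IH] x; first by rewrite /Pr big_ord0 dvdz1 ?fact0.
move: x; apply: int_ind2; first by rewrite Pr0 dvdz0.
move=> x; rewrite PrD rpredDr // factS PoszM.
by apply: dvdz_mul => //.
Qed.

Lemma binzE x d : binz x d * (d`!)%:Z = Pr x d.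
Proof. by rewrite /binz divzK // fact_dvd. Qed.

Lemma binz_pascal x d : binz (x + 1) d.+1 = binz x d.+1 + binz x d.
Proof.
apply: (@mulIf _ ((d.+1)`!)%:Z); first by rewrite eqz_nat -lt0n fact_gt0.
rewrite mulrDl !binzE PrD factS PoszM mulrCA binzE.
by rewrite mulrC.
Qed.

Lemma binz0 x : binz x 0 = 1.
Proof. by rewrite /binz big_ord0 fact0 divz1. Qed.

Lemma binz0S d : binz 0 d.+1 = 0.
Proof. by rewrite /binz -/(Pr 0 d.+1) Pr0 div0z. Qed.



Section B.
Variable R : comNzRingType.
Implicit Types p q : {poly R}.

Lemma sum_widen (F : nat -> R) s m : (s <= m)%N -> (forall i, (s <= i)%N -> F i = 0) ->
  \sum_(i < s) F i = \sum_(i < m) F i.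
Proof.
move=> Hsm H0; rewrite -!(big_mkord xpredT) (big_cat_nat (leq0n s) Hsm) /=.
rewrite [X in _ + X]big_nat_cond [X in _ + X]big1 ?addr0 // => i /andP[/andP[Hi _] _]; exact: H0.
Qed.

Lemma pf1_evalE p x m : (size p <= m)%N ->
  pf1_eval p x = \sum_(i < m) p`_i * (binz x i)%:~R.
Proof.
move=> H; rewrite /pf1_eval (@sum_widen (fun i => p`_i * (binz x i)%:~R) _ _ H) //.
by move=> i Hi; rewrite nth_default // mul0r.
Qed.

Definition dpoly p := \poly_(i < (size p).-1) p`_i.+1.

Lemma coef_dpoly p i : (dpoly p)`_i = p`_i.+1.
Proof.
rewrite coef_poly; case: ifP => // H.
rewrite nth_default //; move/negbT: H; rewrite -leqNgt; case: (size p) => //= n.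
Qed.

Lemma size_dpoly p : (size (dpoly p) <= (size p).-1)%N.
Proof. exact: size_poly. Qed.

Lemma pf1_delta p x : pf1_eval p (x + 1) - pf1_eval p x = pf1_eval (dpoly p) x.
Proof.
set m := size p.
have Hd : (size (dpoly p) <= m.+1)%N.
  by apply: leq_trans (size_dpoly p) _; apply: leq_trans (leq_pred _) (leqnSn _).
rewrite !(@pf1_evalE _ _ m.+1) ?leqnSn //.
rewrite -sumrB big_ord_recl /= !binz0 subrr add0r.
rewrite big_ord_recr /= coef_dpoly (nth_default _ (leqnSn m)) mul0r addr0.
 apply: eq_bigr => i _; rewrite coef_dpoly /bump /= add1n binz_pascal intrD.
ring.
Qed.

Lemma pf1_evalD p q x : pf1_eval (p + q) x = pf1_eval p x + pf1_eval q x.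
Proof.
set m := maxn (size p) (size q).
rewrite !(@pf1_evalE _ _ m) ?leq_maxl ?leq_maxr ?size_polyD // -big_split.
by apply: eq_bigr => i _; rewrite coefD mulrDl.
Qed.

Lemma pf1_evalB p q x : pf1_eval (p - q) x = pf1_eval p x - pf1_eval q x.
Proof.
by rewrite -[in RHS](subrK q p) [in RHS]pf1_evalD addrK.
Qed.

Lemma pf1_eval0p x : pf1_eval (0 : {poly R}) x = 0.
Proof. by rewrite /pf1_eval size_poly0 big_ord0. Qed.

Lemma pf1_eval_at0 p : pf1_eval p 0 = p`_0.
Proof.
rewrite (@pf1_evalE _ _ (size p).+1) // big_ord_recl binz0 mulr1 big1 ?addr0 //.
by move=> i _; rewrite /bump /= binz0S mulr0.
Qed.

Lemma pf1_evalC (c : R) x : pf1_eval c%:P x = c.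
Proof.
rewrite (@pf1_evalE _ _ 1) ?size_polyC ?leq_b1 // big_ord1 coefC binz0 mulr1 //.
Qed.

Lemma shift1 p : exists p', (size p' <= size p)%N /\
   forall x, pf1_eval p (x + 1) = pf1_eval p' x.
Proof.
exists (p + dpoly p); split.
  apply: leq_trans (size_polyD _ _) _; rewrite geq_max leqnn.
  exact: leq_trans (size_dpoly p) (leq_pred _).
by move=> x; rewrite pf1_evalD -pf1_delta (addrC (pf1_eval p x)) subrK.
Qed.

Lemma shiftn p (a : nat) : exists p', (size p' <= size p)%N /\
   forall x, pf1_eval p (x + a%:Z) = pf1_eval p' x.
Proof.
elim: a => [|a [p' [Hs He]]]; first by exists p; split => // x; rewrite addr0.
have [p'' [Hs' He']] := shift1 p'.
exists p''; split; first exact: leq_trans Hs' Hs.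
by move=> x; rewrite -He' -He -addn1 PoszD addrA (addrAC x).
Qed.

Lemma Tlow p (a : nat) : exists p', (size p' <= (size p).-1)%N /\
   forall x, pf1_eval p (x + a%:Z) - pf1_eval p x = pf1_eval p' x.
Proof.
elim: a => [|a [p' [Hs He]]].
  by exists 0; split => [|x]; rewrite ?size_poly0 // addr0 subrr pf1_eval0p.
have [p'' [Hs' He']] := shiftn (dpoly p) a.
exists (p'' + p'); split.
  apply: leq_trans (size_polyD _ _) _; rewrite geq_max Hs andbT.
  exact: leq_trans Hs' (size_dpoly p).
move=> x; rewrite pf1_evalD -He' -He -pf1_delta -addn1 PoszD addrA (addrAC x).
by rewrite addrA subrK.
Qed.

Lemma per_mul (f : int -> R) (a : nat) : (forall x, f (x + a%:Z) = f x) ->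
  forall (j : nat) x, f (x + (j * a)%N%:Z) = f x.
Proof.
move=> H; elim=> [|j IH] x; first by rewrite mul0n addr0.
by rewrite mulSn PoszD addrA (addrAC x) H IH.
Qed.

Lemma L2core (a b : nat) : (exists u : R, u * b%:R = 1) -> forall n (g : {poly R}),
  (size g <= n)%N -> (forall x, \sum_(j < b) pf1_eval g (x + (j * a)%N%:Z) = 0) ->
  forall x, pf1_eval g x = 0.
Proof.
move=> [u Hu]; elim=> [|n IH] g Hs Hsum x.
  by move: Hs; rewrite leqn0 size_poly_eq0 => /eqP ->; rewrite pf1_eval0p.
have [h [Hhs Hh]] := Tlow g a.
have Hh0 : forall y, pf1_eval h y = 0.
  apply: (IH h) => //; first by apply: leq_trans Hhs _; rewrite -ltnS; case: (size g) Hs.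
  move=> y; under eq_bigr => j _ do rewrite -Hh -addrA (addrC (j * a)%N%:Z) addrA.
  by rewrite sumrB Hsum Hsum subrr.
have Hper : forall y, pf1_eval g (y + a%:Z) = pf1_eval g y.
  by move=> y; apply/eqP; rewrite -subr_eq0 Hh Hh0.
move: (Hsum x); under eq_bigr => j _ do rewrite (@per_mul _ _ Hper).
rewrite sumr_const card_ord -mulr_natr => /(congr1 (fun z => z * u)).
by rewrite -mulrA (mulrC b%:R) Hu mulr1 mul0r.
Qed.

Lemma L2 (a b : nat) p : (exists u : R, u * b%:R = 1) ->
  (forall x, pf1_eval p (x + (a * b)%N%:Z) = pf1_eval p x) ->
  forall x, pf1_eval p (x + a%:Z) = pf1_eval p x.
Proof.
move=> Hb Hp x; have [g [_ Hg]] := Tlow p a.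
apply/eqP; rewrite -subr_eq0 Hg; apply/eqP; apply: (@L2core a b Hb (size g) g (leqnn _)) => y.
under eq_bigr => j _ do rewrite -Hg -addrA -PoszD -mulSnr.
rewrite -(big_mkord xpredT (fun j => pf1_eval p (y + (j.+1 * a)%N%:Z) - pf1_eval p (y + (j * a)%N%:Z))).
by rewrite telescope_sumr // mul0n addr0 mulnC Hp subrr.
Qed.

End B.



Section C.
Variable R : comNzRingType.
Implicit Types p q : {poly R}.

Definition Nsum (f : int -> R) d :=
  \sum_(k < d.+1) ((-1) ^+ (d - k) *+ 'C(d, k)) * f (k : nat)%:Z.

Definition Ssum (f : int -> R) d :=
  \sum_(k < d.+1) (-1) ^+ (d + k) * ('C(d, k))%:R * f (k : nat)%:Z.

Lemma sign_eq d k : ((-1) ^+ (d - k) *+ 'C(d, k) : R) = (-1) ^+ (d + k) * ('C(d, k))%:R.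
Proof.
case: (leqP k d) => H; last by rewrite bin_small // mulr0n mulr0.
rewrite mulr_natr; congr (_ *+ _).
by rewrite -signr_odd -[in RHS]signr_odd oddD oddB.
Qed.

Lemma NsumE f d : Nsum f d = Ssum f d.
Proof. by apply: eq_bigr => k _; rewrite sign_eq. Qed.

Lemma Ssum_step f d : Ssum f d.+1 = Ssum (fun x => f (x + 1) - f x) d.
Proof.
rewrite /Ssum big_ord_recl /= bin0 addn0.
under eq_bigr => i _ do rewrite /bump /= add1n binS natrD mulrDr mulrDl.
rewrite big_split /= big_ord_recr /= bin_small // mulr0 mul0r addr0.
under [X in _ = X]eq_bigr => i _ do rewrite mulrBr -PoszD addn1.
rewrite sumrB [X in _ = _ - X]big_ord_recl /= bin0 addn0.
have E1 : forall i : 'I_d.+1, (-1) ^+ (d.+1 + i.+1) * ('C(d, i))%:R * f i.+1%:Z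
   = (-1) ^+ (d + i) * ('C(d, i))%:R * f i.+1%:Z.
  by move=> i; rewrite addnS addSn !exprS !mulN1r opprK.
rewrite (eq_bigr _ (fun i _ => E1 i)).
have E2 : forall i : 'I_d, (-1) ^+ (d.+1 + i.+1) * ('C(d, i.+1))%:R * f i.+1%:Z
   = - ((-1) ^+ (d + bump 0 i) * ('C(d, bump 0 i))%:R * f (bump 0 i)%:Z).
  by move=> i; rewrite /bump /= add1n addSn !addnS !exprS; ring.
rewrite (eq_bigr _ (fun i _ => E2 i)) sumrN.
rewrite exprS; ring.
Qed.

Lemma Nsum_step f d : Nsum f d.+1 = Nsum (fun x => f (x + 1) - f x) d.
Proof. by rewrite !NsumE Ssum_step. Qed.

Lemma Nsum_pf d : forall p, Nsum (pf1_eval p) d = p`_d.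
Proof.
elim: d => [|d IH] p.
  by rewrite /Nsum big_ord1 /= mulr1n mul1r pf1_eval_at0.
rewrite Nsum_step -coef_dpoly -IH; congr Nsum.
by apply: functional_extensionality => x; rewrite pf1_delta.
Qed.

Lemma newton_pf p n : (size p <= n)%N -> newton1 (pf1_eval p) n = p.
Proof.
move=> H; apply/polyP => d; rewrite coef_poly; case: ifP => Hd.
  exact: Nsum_pf.
by rewrite nth_default // (leq_trans H) // leqNgt Hd.
Qed.

Lemma pf1_uniq p q : (forall x, pf1_eval p x = pf1_eval q x) -> p = q.
Proof.
move=> H; have E := functional_extensionality _ _ H.
transitivity (newton1 (pf1_eval p) (maxn (size p) (size q))).
  by rewrite newton_pf ?leq_maxl.
by rewrite E newton_pf ?leq_maxr.
Qed.

Lemma newton0 n : newton1 (fun _ : int => (0 : R)) n = 0.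
Proof.
by rewrite -[X in newton1 X](functional_extensionality _ _ (@pf1_eval0p R)) newton_pf ?size_poly0.
Qed.

Lemma Nsum_const (c : R) d : Nsum (fun _ => c) d.+1 = 0.
Proof.
have := Nsum_pf d.+1 c%:P; rewrite coefC /= => <-.
by congr Nsum; apply: functional_extensionality => x; rewrite pf1_evalC.
Qed.

End C.



Section D.
Variable R : comNzRingType.
Implicit Types p q : {poly R}.
Implicit Types Q : {poly {poly R}}.

Lemma pf2_evalE Q x1 x2 m1 m2 : (size Q <= m1)%N -> (forall i, (size (Q`_i)%R <= m2)%N) ->
  pf2_eval Q x1 x2 = \sum_(i < m1) \sum_(j < m2)
     Q`_i`_j * (binz x1 i)%:~R * (binz x2 j)%:~R.
Proof.
move=> H1 H2; rewrite /pf2_eval.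
have Hin : forall i : 'I_(size Q), \sum_(j < size Q`_i) Q`_i`_j * (binz x1 i)%:~R * (binz x2 j)%:~R
   = \sum_(j < m2) Q`_i`_j * (binz x1 i)%:~R * (binz x2 j)%:~R.
  move=> i; apply: (@sum_widen R (fun j => Q`_i`_j * (binz x1 i)%:~R * (binz x2 j)%:~R) _ m2 (H2 i)).
  by move=> j Hj; rewrite nth_default // !mul0r.
rewrite (eq_bigr _ (fun i _ => Hin i)).
apply: (@sum_widen R (fun i => \sum_(j < m2) Q`_i`_j * (binz x1 i)%:~R * (binz x2 j)%:~R)) => // i Hi.
by apply: big1 => j _; rewrite (nth_default _ Hi) coef0 !mul0r.
Qed.

Lemma msz_ge Q i : (size (Q`_i)%R <= msz Q)%N.
Proof.
case: (ltnP i (size Q)) => H.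
  exact: (@leq_bigmax _ (fun j : 'I_(size Q) => size Q`_j) (Ordinal H)).
by rewrite nth_default // size_poly0.
Qed.

Lemma pf2_eval_X1 p x1 x2 : pf2_eval (pf_in_X1 p) x1 x2 = pf1_eval p x1.
Proof.
rewrite (@pf2_evalE _ _ _ (size p) 1) ?size_map_polyC //; last first.
  by move=> i; rewrite /pf_in_X1 coef_map /= size_polyC leq_b1.
rewrite (@pf1_evalE _ _ _ (size p)) //; apply: eq_bigr => i _.
by rewrite big_ord1 /pf_in_X1 coef_map /= coefC /= binz0 mulr1.
Qed.

Lemma pf2_eval_X2 p x1 x2 : pf2_eval (pf_in_X2 p) x1 x2 = pf1_eval p x2.
Proof.
rewrite (@pf2_evalE _ _ _ 1 (size p)) ?size_polyC ?leq_b1 //; last first.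
  by move=> i; rewrite /pf_in_X2 coefC; case: (i == 0)%N; rewrite ?size_poly0.
rewrite (@pf1_evalE _ _ _ (size p)) // big_ord1; apply: eq_bigr => j _.
by rewrite /pf_in_X2 coefC /= binz0 mulr1.
Qed.

Lemma msz_X1 p : p != 0 -> msz (pf_in_X1 p) = 1%N.
Proof.
move=> Hp; apply/eqP; rewrite eqn_leq; apply/andP; split.
  apply/bigmax_leqP => i _; rewrite /pf_in_X1 coef_map /= size_polyC leq_b1 //.
have Hs : ((size p).-1 < size (pf_in_X1 p))%N by rewrite size_map_polyC prednK ?lt0n ?size_poly_eq0.
apply: leq_trans (@leq_bigmax _ (fun j : 'I_(size (pf_in_X1 p)) => size (pf_in_X1 p)`_j) (Ordinal Hs)).
rewrite /pf_in_X1 coef_map /= size_polyC lt0b.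
by rewrite -/(lead_coef p) lead_coef_eq0.
Qed.

Lemma msz_X2 p : msz (pf_in_X2 p) = size p.
Proof.
have [->|Hp] := eqVneq p 0.
  by rewrite /msz /pf_in_X2 polyC0 !size_poly0 big_ord0.
by rewrite /msz /pf_in_X2 size_polyC Hp big_ord1 coefC /=.
Qed.

Lemma size_X2 p : p != 0 -> size (pf_in_X2 p) = 1%N.
Proof. by move=> Hp; rewrite /pf_in_X2 size_polyC Hp. Qed.

Lemma poly1 (E : nat -> R) : \poly_(i < 1) E i = (E 0%N)%:P.
Proof. by apply/polyP => i; rewrite coef_poly coefC; case: i. Qed.

Lemma poly1P (E : nat -> {poly R}) : \poly_(i < 1) E i = (E 0%N)%:P.
Proof. by apply/polyP => i; rewrite coef_poly coefC; case: i. Qed.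

Lemma newton2_X1 (g : int -> R) N :
  newton2 (fun x1 _ => g x1) N 1 = pf_in_X1 (newton1 g N).
Proof.
apply/polyP => i; rewrite /newton2 /newton1 /pf_in_X1 coef_map /= !coef_poly.
case: ifP => _; last by rewrite polyC0.
rewrite poly1; congr polyC; apply: eq_bigr => k _.
by rewrite big_ord1 /= mulr1n mulr1.
Qed.

Lemma newton2_X2 (g : int -> R) M :
  newton2 (fun _ x2 => g x2) 1 M = pf_in_X2 (newton1 g M).
Proof.
rewrite /newton2 /newton1 /pf_in_X2 poly1P; congr polyC.
apply/polyP => j; rewrite !coef_poly; case: ifP => // _.
by rewrite big_ord1 /= mulr1n; apply: eq_bigr => k _; rewrite subnn expr0 mul1r.
Qed.

Lemma newton2_0 N M : newton2 (fun _ _ => (0 : R)) N M = 0.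
Proof.
apply/polyP => i; rewrite coef_poly coef0; case: ifP => // _.
apply/polyP => j; rewrite coef_poly coef0; case: ifP => // _.
by rewrite big1 // => k _; rewrite big1 // => l _; rewrite mulr0.
Qed.

Lemma newton1_ext (f g : int -> R) n : (forall x, f x = g x) -> newton1 f n = newton1 g n.
Proof. by move=> H; rewrite (functional_extensionality _ _ H). Qed.

Lemma newton2_ext (f g : int -> int -> R) N M : (forall x1 x2, f x1 x2 = g x1 x2) ->
  newton2 f N M = newton2 g N M.
Proof.
move=> H; have -> // : f = g.
by apply: functional_extensionality => x1; apply: functional_extensionality => x2.
Qed.

Lemma mul_X1 p q : pf_in_X1 (pf1_mul p q) = pf2_mul (pf_in_X1 p) (pf_in_X1 q).
Proof.
rewrite /pf1_mul /pf2_mul (@newton2_ext _ (fun x1 _ => pf1_eval p x1 * pf1_eval q x1));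
  last by move=> x1 x2; rewrite !pf2_eval_X1.
have [->|Hp] := eqVneq p 0.
  rewrite (@newton1_ext _ (fun _ => 0)) ?(@newton2_ext _ (fun _ _ => 0));
    try by move=> *; rewrite pf1_eval0p mul0r.
  by rewrite newton0 newton2_0 /pf_in_X1 map_poly0.
have [->|Hq] := eqVneq q 0.
  rewrite (@newton1_ext _ (fun _ => 0)) ?(@newton2_ext _ (fun _ _ => 0));
    try by move=> *; rewrite pf1_eval0p mulr0.
  by rewrite newton0 newton2_0 /pf_in_X1 map_poly0.
rewrite msz_X1 // msz_X1 // !size_map_polyC.
by rewrite (newton2_X1 (fun x => pf1_eval p x * pf1_eval q x)).
Qed.

Lemma mul_X2 p q : pf_in_X2 (pf1_mul p q) = pf2_mul (pf_in_X2 p) (pf_in_X2 q).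
Proof.
rewrite /pf1_mul /pf2_mul (@newton2_ext _ (fun _ x2 => pf1_eval p x2 * pf1_eval q x2));
  last by move=> x1 x2; rewrite !pf2_eval_X2.
have [->|Hp] := eqVneq p 0.
  rewrite (@newton1_ext _ (fun _ => 0)) ?(@newton2_ext _ (fun _ _ => 0));
    try by move=> *; rewrite pf1_eval0p mul0r.
  by rewrite newton0 newton2_0 /pf_in_X2 polyC0.
have [->|Hq] := eqVneq q 0.
  rewrite (@newton1_ext _ (fun _ => 0)) ?(@newton2_ext _ (fun _ _ => 0));
    try by move=> *; rewrite pf1_eval0p mulr0.
  by rewrite newton0 newton2_0 /pf_in_X2 polyC0.
rewrite !msz_X2 !size_X2 //.
by rewrite (newton2_X2 (fun x => pf1_eval p x * pf1_eval q x)).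
Qed.

Lemma diag_X1 p : pf2_diag (pf_in_X1 p) = p.
Proof.
rewrite /pf2_diag (@newton1_ext _ (pf1_eval p)); last by move=> x; rewrite pf2_eval_X1.
have [->|Hp] := eqVneq p 0; first by rewrite newton_pf // size_poly0.
by rewrite msz_X1 // size_map_polyC addn1 /= newton_pf.
Qed.

Lemma diag_X2 p : pf2_diag (pf_in_X2 p) = p.
Proof.
rewrite /pf2_diag (@newton1_ext _ (pf1_eval p)); last by move=> x; rewrite pf2_eval_X2.
have [->|Hp] := eqVneq p 0; first by rewrite newton_pf // size_poly0.
by rewrite msz_X2 size_X2 // add1n /= newton_pf.
Qed.

End D.



Section E.
Variable R : comNzRingType.
Implicit Types p q : {poly R}.
Implicit Types Q : {poly {poly R}}.

Lemma per_const (b : nat) (g : {poly R}) : (exists u : R, u * b%:R = 1) ->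
  (forall x, pf1_eval g (x + b%:Z) = pf1_eval g x) -> g = (g`_0)%:P.
Proof.
move=> Hb Hp.
have H1 : forall x, pf1_eval g (x + (1%N)%:Z) = pf1_eval g x.
  by apply: (@L2 R 1%N b g Hb) => x; rewrite mul1n.
have Hc : forall x, pf1_eval g x = pf1_eval g 0.
  apply: int_ind2 => // x; rewrite H1 //.
by apply: pf1_uniq => x; rewrite Hc pf1_evalC pf1_eval_at0.
Qed.

Lemma colX1 (b : nat) Q : (exists u : R, u * b%:R = 1) ->
  (forall x1 x2, pf2_eval Q x1 (x2 + b%:Z) = pf2_eval Q x1 x2) ->
  Q = pf_in_X1 (\poly_(i < size Q) Q`_i`_0).
Proof.
move=> Hb HQ.
set m := msz Q.
pose g x1 := \poly_(j < m) \sum_(i < size Q) Q`_i`_j * (binz x1 i)%:~R.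
have Hg : forall x1 x2, pf2_eval Q x1 x2 = pf1_eval (g x1) x2.
  move=> x1 x2; rewrite (@pf2_evalE _ Q x1 x2 (size Q) m (leqnn _) (msz_ge _ Q)).
  rewrite (@pf1_evalE _ (g x1) x2 m (size_poly _ _)) exchange_big /=.
  apply: eq_bigr => j _; rewrite coef_poly ltn_ord mulr_suml.
  by apply: eq_bigr => i _.
have Hc : forall x1, g x1 = ((g x1)`_0)%:P.
  by move=> x1; apply: (@per_const b _ Hb) => x2; rewrite -!Hg HQ.
have Hz : forall i j, (0 < j)%N -> Q`_i`_j = 0.
  move=> i j Hj; case: (ltnP j m) => Hjm; last first.
    by rewrite nth_default // (leq_trans (msz_ge _ Q i)).
  pose col := \poly_(i < size Q) Q`_i`_j.
  have Hcol : col = 0.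
    apply: pf1_uniq => x1; rewrite pf1_eval0p.
    have := congr1 (fun p => p`_j) (Hc x1); rewrite coefC coef_poly Hjm.
    have -> : (j == 0%N) = false by rewrite eqn0Ngt Hj.
    move=> E; rewrite (@pf1_evalE _ col x1 (size Q) (size_poly _ _)); apply: (etrans _ E).
    by apply: eq_bigr => i' _; rewrite coef_poly ltn_ord.
  case: (ltnP i (size Q)) => Hi; last by rewrite (nth_default _ Hi) coef0.
  by have := congr1 (fun p => p`_i) Hcol; rewrite coef_poly Hi coef0.
apply/polyP => i; rewrite /pf_in_X1 coef_map /= coef_poly.
apply/polyP => j; rewrite coefC; case: j => [|j] /=.
  case: ifP => // Hi; have Hi2 : (size Q <= i)%N by rewrite leqNgt Hi.
  by rewrite (nth_default _ Hi2) coef0.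
by rewrite Hz.
Qed.

Lemma rowX2 (b : nat) Q : (exists u : R, u * b%:R = 1) ->
  (forall x1 x2, pf2_eval Q (x1 + b%:Z) x2 = pf2_eval Q x1 x2) ->
  Q = pf_in_X2 Q`_0.
Proof.
move=> Hb HQ.
pose h x2 := \poly_(i < size Q) pf1_eval Q`_i x2.
have Hh : forall x1 x2, pf2_eval Q x1 x2 = pf1_eval (h x2) x1.
  move=> x1 x2; rewrite /pf2_eval (@pf1_evalE _ (h x2) x1 (size Q) (size_poly _ _)).
  apply: eq_bigr => i _; rewrite coef_poly ltn_ord /pf1_eval mulr_suml.
  by apply: eq_bigr => j _; rewrite mulrAC.
have Hc : forall x2, h x2 = ((h x2)`_0)%:P.
  by move=> x2; apply: (@per_const b _ Hb) => x1; rewrite -!Hh HQ.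
have Hz : forall i, (0 < i)%N -> Q`_i = 0.
  move=> i Hi; case: (ltnP i (size Q)) => Hs; last by rewrite nth_default.
  apply: pf1_uniq => x2; rewrite pf1_eval0p.
  have := congr1 (fun p => p`_i) (Hc x2); rewrite coefC coef_poly Hs.
  by have -> : (i == 0%N) = false by rewrite eqn0Ngt Hi.
by apply/polyP => i; rewrite /pf_in_X2 coefC; case: i => [|i] //=; rewrite Hz.
Qed.

Lemma per_int (f : int -> R) (a : nat) : (forall x, f (x + a%:Z) = f x) ->
  forall (k : int) x, f (x + k * a%:Z) = f x.
Proof.
move=> H k x; case: k => n.
  by rewrite -PoszM (@per_mul R f a H).
rewrite NegzE mulNr -PoszM.
by rewrite -[in RHS](subrK ((n.+1 * a)%N%:Z) x) (@per_mul R f a H).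
Qed.

Lemma per_mod (f : int -> R) (a : nat) : (forall x, f (x + a%:Z) = f x) ->
  forall x y, (y = x %[mod a%:Z])%Z -> f y = f x.
Proof.
move=> H x y Hm.
have -> : y = x + ((y %/ a%:Z)%Z - (x %/ a%:Z)%Z) * a%:Z.
  have Ey := divz_eq y a%:Z; have Ex := divz_eq x a%:Z; rewrite Hm in Ey.
  move: (y %/ a%:Z)%Z (x %/ a%:Z)%Z (x %% a%:Z)%Z Ey Ex => A B r -> ->; ring.
exact: per_int.
Qed.

End E.

Lemma unitZ (r b : nat) : (1 < r)%N -> coprime b r -> exists u : 'Z_r, u * b%:R = 1.
Proof.
move=> Hr Hc; have Hu : (b%:R : 'Z_r) \is a GRing.unit by rewrite unitZpE // coprime_sym.
by exists (b%:R)^-1; rewrite mulVr.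
Qed.



Lemma evB2_check r1 r2 (P : PF1B r1 r2) x1 x2 :
  evB2 (checkB P) x1 x2 = (pf1_eval P.1 x1, pf1_eval P.2 x2).
Proof. by rewrite /evB2 /checkB /= pf2_eval_X1 pf2_eval_X2. Qed.

Lemma Pdecomp r1 r2 q1 q2 (P : PF1B r1 r2) :
  (2 <= r1)%N -> (2 <= r2)%N -> coprime q1 r2 -> coprime q2 r1 ->
  periodicB1 P (q1 * q2) ->
  (forall x, pf1_eval P.1 (x + q1%:Z) = pf1_eval P.1 x) /\
  (forall x, pf1_eval P.2 (x + q2%:Z) = pf1_eval P.2 x).
Proof.
move=> Hr1 Hr2 Hc1 Hc2 HP; split.
  apply: (@L2 _ q1 q2 P.1 (@unitZ _ _ Hr1 Hc2)) => x.
  by have := congr1 fst (HP x).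
apply: (@L2 _ q2 q1 P.2 (@unitZ _ _ Hr2 Hc1)) => x.
by have := congr1 snd (HP x); rewrite mulnC.
Qed.

Lemma Qdecomp r1 r2 q1 q2 (Q : PF2B r1 r2) :
  (2 <= r1)%N -> (2 <= r2)%N -> coprime q1 r2 -> coprime q2 r1 ->
  periodicB2 Q q1 q2 ->
  exists c1 c2, Q = (pf_in_X1 c1, pf_in_X2 c2) /\
  (forall x, pf1_eval c1 (x + q1%:Z) = pf1_eval c1 x) /\
  (forall x, pf1_eval c2 (x + q2%:Z) = pf1_eval c2 x).
Proof.
move=> Hr1 Hr2 Hc1 Hc2 HQ; case: Q HQ => Q1 Q2 HQ.
have E1 := @colX1 _ q2 Q1 (@unitZ _ _ Hr1 Hc2) (fun x1 x2 => congr1 fst (proj2 (HQ x1 x2))).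
have E2 := @rowX2 _ q1 Q2 (@unitZ _ _ Hr2 Hc1) (fun x1 x2 => congr1 snd (proj1 (HQ x1 x2))).
move: E1 E2; set c1 := \poly_(i < size Q1) _; set c2 := Q2`_0 => E1 E2.
exists c1, c2; split; first by rewrite -E1 -E2.
split => x.
  have := congr1 fst (proj1 (HQ x 0)); rewrite /evB2 /= E1 !pf2_eval_X1 //.
have := congr1 snd (proj2 (HQ 0 x)); rewrite /evB2 /= E2 !pf2_eval_X2 //.
Qed.

Theorem theorem3p16 (r1 r2 q1 q2 : nat) :
  (2 <= r1)%N -> (2 <= r2)%N -> (0 < q1)%N -> (0 < q2)%N ->
  coprime q1 r2 -> coprime q2 r1 ->
  (* check P is (q1,q2)-periodic *)
  (forall P : PF1B r1 r2, periodicB1 P (q1 * q2) -> periodicB2 (checkB P) q1 q2) /\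
  (* ring homomorphism on the q1q2-periodic polyfracts *)
  (forall P P' : PF1B r1 r2, periodicB1 P (q1 * q2) -> periodicB1 P' (q1 * q2) ->
     checkB (addB1 P P') = addB2 (checkB P) (checkB P') /\
     checkB (mulB1 P P') = mulB2 (checkB P) (checkB P')) /\
  checkB (oneB1 r1 r2) = oneB2 r1 r2 /\
  (* bijective, with inverse Q |-> Q|_{X1:=X,X2:=X} *)
  (forall P : PF1B r1 r2, periodicB1 P (q1 * q2) -> diagB (checkB P) = P) /\
  (forall Q : PF2B r1 r2, periodicB2 Q q1 q2 ->
     periodicB1 (diagB Q) (q1 * q2) /\ checkB (diagB Q) = Q) /\
  (* if moreover gcd(q1,q2) = 1: check P = P o theta^-1, Q|_{..} = Q o theta *)
  (coprime q1 q2 ->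
     (forall P : PF1B r1 r2, periodicB1 P (q1 * q2) ->
        forall (x1 x2 y : int),
          (y = x1 %[mod q1%:Z])%Z -> (y = x2 %[mod q2%:Z])%Z ->
          evB2 (checkB P) x1 x2 = evB1 P y) /\
     (forall Q : PF2B r1 r2, periodicB2 Q q1 q2 ->
        forall (x x1 x2 : int),
          (x1 = x %[mod q1%:Z])%Z -> (x2 = x %[mod q2%:Z])%Z ->
          evB1 (diagB Q) x = evB2 Q x1 x2)).
Proof.
move=> Hr1 Hr2 Hq1 Hq2 Hc1 Hc2.
split.
  move=> P HP; have [H1 H2] := @Pdecomp _ _ _ _ _ Hr1 Hr2 Hc1 Hc2 HP.
  by move=> x1 x2; rewrite !evB2_check H1 H2.
split.
  move=> P P' _ _; split.
    by rewrite /checkB /addB1 /addB2 /pf_in_X1 /pf_in_X2 /= !raddfD.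
  by rewrite /checkB /mulB1 /mulB2 /= mul_X1 mul_X2.
split.
  by rewrite /checkB /oneB1 /oneB2 /pf_in_X1 /pf_in_X2 /= -polyC1 map_polyC /= polyC1.
split.
  by move=> [p1 p2] _; rewrite /diagB /checkB /= diag_X1 diag_X2.
split.
  move=> Q HQ; have [c1 [c2 [-> [H1 H2]]]] := @Qdecomp _ _ _ _ _ Hr1 Hr2 Hc1 Hc2 HQ.
  rewrite /diagB /= diag_X1 diag_X2; split => // x.
  rewrite /evB1 /=; congr pair.
    by rewrite mulnC PoszM -(@per_int _ _ _ H1 q2%:Z x) mulrC.
  by rewrite PoszM -(@per_int _ _ _ H2 q1%:Z x) mulrC.
move=> _; split.
  move=> P HP x1 x2 y Hy1 Hy2; have [H1 H2] := @Pdecomp _ _ _ _ _ Hr1 Hr2 Hc1 Hc2 HP.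
  rewrite evB2_check /evB1; congr pair.
    by rewrite (@per_mod _ _ _ H1 _ _ Hy1).
  by rewrite (@per_mod _ _ _ H2 _ _ Hy2).
move=> Q HQ x x1 x2 Hx1 Hx2; have [c1 [c2 [-> [H1 H2]]]] := @Qdecomp _ _ _ _ _ Hr1 Hr2 Hc1 Hc2 HQ.
rewrite /diagB /= diag_X1 diag_X2 /evB1 /evB2 /= pf2_eval_X1 pf2_eval_X2; congr pair.
  by rewrite (@per_mod _ _ _ H1 _ _ Hx1).
by rewrite (@per_mod _ _ _ H2 _ _ Hx2).
Qed.
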